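(* Let $\pi$ be a probability measure on $\mathcal{B}_n=\{0,1\}^n$ and let $L$ be the generator of a $\pi$-reversible flip-swap random walk on $\mathcal{B}_n$ which is $R$-stable for some $R\ge0$. Let $f\colon\mathcal{B}_n\to\mathbb{R}$ and $\alpha\in[0,\infty)^n$ be such that $|f(x)-f(y)|\le d_\alpha(x,y)$ for all $x,y\in\mathcal{B}_n$. Then for all $t>0$, \[ \pi\big(f>\pi(f)+t\big)\le\exp\Big(-\frac{t^2}{8R|\alpha|^2}\Big). \] In this estimate one can also replace $8|\alpha|^2$ with $16\sum_{i=1}^{\lceil\Delta(L)/R\rho(L)\rceil}(\alpha_i^{\downarrow})^2$.
   Context: A generator on $\mathcal{B}_n$ is a real matrix $L=(L(x,y))_{x,y\in\mathcal{B}_n}$ with $L(x,y)\ge0$ for $x\neq y$ and $\sum_yL(x,y)=0$ for all $x$; it is $\pi$-reversible if $\pi(x)L(x,y)=\pi(y)L(y,x)$ for all $x,y$ (so $\pi$ is stationary). Write $(Lg)(x)=\sum_yL(x,y)g(y)$, $\mathcal{E}(f,g)=-\sum_x\pi(x)f(x)(Lg)(x)$, $\mathrm{Ent}_\pi(f)=\pi(f\log f)-\pi(f)\log\pi(f)$ (with $0\log0=0$), and let $\rho(L)$ be the largest constant such that $\rho(L)\mathrm{Ent}_\pi(f)\le\mathcal{E}(f,\log f)$ for all non-constant $f\colon\mathcal{B}_n\to[0,\infty)$ (the modified log-Sobolev inequality). $\Delta(L)=\max_x(-L(x,x))$. $L$ generates a flip-swap random walk if $L(x,y)>0$ for $x\ne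 y$ implies that $y$ is obtained from $x$ by flipping one coordinate or by swapping two coordinates $x_i\neq x_j$. $L$ is $R$-stable if it satisfies the modified log-Sobolev inequality ($\rho(L)>0$) and $\max_{x\in\mathrm{supp}\,\pi,\,i\in[n]}\sum_{y:y_i\ne x_i}L(x,y)\le R\rho(L)$. $d_\alpha(x,y)=\sum_i\alpha_i\mathbf{1}\{x_i\ne y_i\}$, $|\alpha|$ Euclidean norm, $\alpha^{\downarrow}$ non-increasing rearrangement, $\pi(f)=\int f\,d\pi$. *)

(* Defs.v *)
From HB Require Import structures.
From mathcomp Require Import all_boot all_order all_algebra.
From mathcomp Require Import all_classical all_reals all_analysis.
Set Implicit Arguments. Unset Strict Implicit. Unset Printing Implicit Defensive.
Import Order.TTheory GRing.Theory Num.Theory.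
Local Open Scope ring_scope.

Notation cube n := {ffun 'I_n -> bool}.

Section Defs.
Variables (R : realType) (n : nat).
Local Notation B := (cube n).

Definition is_prob (pi : B -> R) := (forall x, 0 <= pi x) /\ \sum_x pi x = 1.

Definition is_generator (L : B -> B -> R) :=
  (forall x y, x != y -> 0 <= L x y) /\ (forall x, \sum_y L x y = 0).

Definition reversible (pi : B -> R) (L : B -> B -> R) :=
  forall x y, pi x * L x y = pi y * L y x.

Definition flip_of (x y : B) (i : 'I_n) :=
  y i != x i /\ (forall k, k != i -> y k = x k).

Definition swap_of (x y : B) (i j : 'I_n) :=
  [/\ x i != x j, y i = x j, y j = x i & forall k, k != i -> k != j -> y k = x k].

Definition flip_swap (L : B -> B -> R) :=
  forall x y, x != y -> 0 < L x y ->
    (exists i, flip_of x y i) \/ (exists i j, swap_of x y i j).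

Definition gen_app (L : B -> B -> R) (g : B -> R) (x : B) := \sum_y L x y * g y.
Definition dirichlet (pi : B -> R) (L : B -> B -> R) (f g : B -> R) :=
  - \sum_x pi x * f x * gen_app L g x.
Definition mean (pi : B -> R) (f : B -> R) := \sum_x pi x * f x.
Definition ent (pi : B -> R) (f : B -> R) :=
  mean pi (fun x => f x * ln (f x)) - mean pi f * ln (mean pi f).

Definition nonconstant (f : B -> R) := exists x y, f x != f y.

Definition mlsi (pi : B -> R) (L : B -> B -> R) (c : R) :=
  forall f : B -> R, (forall x, 0 < f x) -> nonconstant f ->
    c * ent pi f <= dirichlet pi L f (fun x => ln (f x)).

Definition is_mlsi_const (pi : B -> R) (L : B -> B -> R) (rho : R) :=
  mlsi pi L rho /\ forall c, mlsi pi L c -> c <= rho.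

(* Delta(L) = max_x (-L(x,x)) (nonnegative for a generator) *)
Definition Delta (L : B -> B -> R) : R := \big[Num.max/0]_x (- L x x).

(* R-stability, with rho = rho(L) *)
Definition stable (pi : B -> R) (L : B -> B -> R) (rho Rs : R) :=
  0 < rho /\
  forall x, 0 < pi x -> forall i : 'I_n,
    \sum_(y : B | y i != x i) L x y <= Rs * rho.

Definition d_alpha (alpha : 'I_n -> R) (x y : B) : R :=
  \sum_i alpha i * (x i != y i)%:R.

Definition sqnorm (alpha : 'I_n -> R) : R := \sum_i alpha i ^+ 2.

(* sum_{i=1}^k (alpha^down_i)^2 : sum of squares of the k largest entries
   (all entries if k >= n) *)
Definition top_sqsum (alpha : 'I_n -> R) (k : nat) : R :=
  \sum_(a <- take k (sort (fun a b : R => b <= a) [seq alpha i | i : 'I_n])) a ^+ 2.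

Definition prob_gt (pi : B -> R) (f : B -> R) (m : R) : R :=
  \sum_(x | m < f x) pi x.

End Defs.

(* Main.v *)
Require Import Defs.
From HB Require Import structures.
From mathcomp Require Import all_boot all_order all_algebra.
From mathcomp Require Import all_classical all_reals all_analysis.
From mathcomp Require Import ring lra.
Set Implicit Arguments. Unset Strict Implicit. Unset Printing Implicit Defensive.
Import Order.TTheory GRing.Theory Num.Theory.
Local Open Scope ring_scope.
Section Herbst.
Variable R : realType.

Lemma is_derive_ext (f g : R -> R) (x d d' : R) :
  f =1 g -> d = d' -> is_derive x 1 f d -> is_derive x 1 g d'.
Proof. by move=> /funext -> ->. Qed.

Lemma is_derive_fsum (T : finType) (g : T -> R -> R) (dg : T -> R) (l : R) :
  (forall x, is_derive l 1 (g x) (dg x)) ->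
  is_derive l 1 (fun y => \sum_x g x y) (\sum_x dg x).
Proof.
move=> H.
have -> : (fun y => \sum_x g x y) = \sum_x g x.
  by apply/funext => y; rewrite fct_sumE.
elim/big_ind2: _ => //; first exact: is_derive_cst.
by move=> f1 d1 f2 d2 h1 h2; apply: is_deriveD.
Qed.

Lemma is_derive_term (a b l : R) :
  is_derive l 1 (fun y => a * expR (y * b)) (a * (b * expR (l * b))).
Proof.
have h1 : is_derive l 1 (fun y : R => y * b) b.
  apply: is_derive_ext (@is_deriveM R R^o id (fun _ => b) l 1 1 0 (is_derive_id _ _) (is_derive_cst _ _ _)).
    by move=> y.
  by rewrite /= scaler0 add0r /GRing.scale /= mulr1.
have h2 : is_derive l 1 (expR \o (fun y : R => y * b)) (expR (l * b) * b).
  exact: is_derive1_comp.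
apply: is_derive_ext (@is_deriveM R R^o (fun _ => a) _ l 1 0 _ (is_derive_cst _ _ _) h2).
  by move=> y.
by rewrite /= scaler0 addr0 /GRing.scale /= [b * _]mulrC.
Qed.


Lemma exp_bound (u : R) : u <= 1/2 -> expR u - 1 - u <= 2 * u ^+ 2.
Proof.
move=> hu.
have E0 : 0 < expR u := expR_gt0 u.
have h1 : 1 - u <= expR (- u) by have := expR_ge1Dx (- u).
have h2 : expR u * expR (- u) = 1 by rewrite -expRD subrr expR0.
have h3 : expR u * (1 - u) <= expR u * expR (- u).
  by apply: ler_wpM2l => //; apply: ltW.
rewrite h2 in h3.
nra.
Qed.

Variables (T : finType) (pi F : T -> R) (c : R).
Hypotheses (pi0 : forall x, 0 <= pi x) (pi1 : \sum_x pi x = 1)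
  (mF : \sum_x pi x * F x = 0) (c0 : 0 <= c).
Definition Zf (l : R) := \sum_x pi x * expR (l * F x).
Definition Zd (l : R) := \sum_x pi x * (F x * expR (l * F x)).
Hypothesis hent : forall l, 0 < l -> l * Zd l - Zf l * ln (Zf l) <= c * l ^+ 2 * Zf l.

Lemma Zf_ge1 l : 1 <= Zf l.
Proof.
rewrite /Zf; apply: le_trans (_ : \sum_x pi x * (1 + l * F x) <= _).
  under eq_bigr do rewrite mulrDr mulr1 mulrCA.
  by rewrite big_split /= -mulr_sumr mF mulr0 addr0 pi1.
by apply: ler_sum => x _; apply: ler_wpM2l => //; exact: expR_ge1Dx.
Qed.

Lemma Zf_gt0 l : 0 < Zf l.
Proof. exact: lt_le_trans ltr01 (Zf_ge1 l). Qed.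

Definition Bf := \sum_x `|F x|.

Lemma Bf_ge x : `|F x| <= Bf.
Proof.
by rewrite /Bf (bigD1 x) //= lerDl; apply: sumr_ge0 => y _.
Qed.

Lemma Zf_upper l : 0 <= l -> l * Bf <= 1/2 -> Zf l - 1 <= 2 * l ^+ 2 * Bf ^+ 2.
Proof.
move=> l0 lB.
have -> : Zf l - 1 = \sum_x pi x * (expR (l * F x) - 1 - l * F x).
  have e : \sum_x pi x * (expR (l * F x) - 1 - l * F x)
      = Zf l - \sum_x pi x - l * \sum_x pi x * F x.
    by rewrite /Zf mulr_sumr -!sumrB; apply: eq_bigr => x _; ring.
  by rewrite e pi1 mF mulr0 subr0.
apply: (le_trans (y := \sum_x pi x * (2 * l ^+ 2 * Bf ^+ 2))); last first.
  by rewrite -mulr_suml pi1 mul1r.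
apply: ler_sum => x _; apply: ler_wpM2l => //.
have hx := Bf_ge x.
have hu : l * F x <= 1/2.
  apply: le_trans lB; apply: le_trans (ler_norm _) _.
  by rewrite normrM ger0_norm //; apply: ler_wpM2l.
apply: le_trans (exp_bound hu) _.
rewrite exprMn -mulrA.
move: hx; rewrite ler_norml => /andP[hx1 hx2].
have l2 : 0 <= l ^+ 2 by rewrite exprn_ge0.
have : F x ^+ 2 <= Bf ^+ 2 by nra.
nra.
Qed.


Definition phi (l : R) := ln (Zf l) * l^-1 - c * l.
Definition dphi (l : R) :=
  ln (Zf l) * (- l ^- 2) + l^-1 * ((Zf l)^-1 * Zd l) - c.

Lemma is_derive_Zf (l : R) : is_derive l 1 Zf (Zd l).
Proof.
rewrite /Zf /Zd; apply: is_derive_fsum => x.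
exact: is_derive_ext (is_derive_term (pi x) (F x) l).
Qed.

Lemma is_derive_phi (l : R) : 0 < l -> is_derive l 1 phi (dphi l).
Proof.
move=> l0.
have hln : is_derive l 1 (@ln R \o Zf) ((Zf l)^-1 * Zd l).
  apply: is_derive1_comp; last exact: is_derive_Zf.
  exact: is_derive1_ln (Zf_gt0 l).
have hinv := @is_deriveV R id l 1 1 (lt0r_neq0 l0) (is_derive_id _ _).
have hM := is_deriveM hln hinv.
have hc : is_derive l 1 (fun y : R => c * y) c.
  apply: is_derive_ext (@is_deriveZ R R^o R^o id c l 1 1 (is_derive_id _ _)) => //.
  by rewrite /GRing.scale /= mulr1.
have hB := is_deriveB hM hc.
apply: is_derive_ext hB.
  by move=> y.
by rewrite /dphi /GRing.scale /= mulr1.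
Qed.

Lemma dphi_le0 (l : R) : 0 < l -> dphi l <= 0.
Proof.
move=> l0.
have Z0 := Zf_gt0 l.
have h := hent l0.
have -> : dphi l = (l * Zd l - Zf l * ln (Zf l) - c * l ^+ 2 * Zf l) / (l ^+ 2 * Zf l).
  by rewrite /dphi; field; rewrite !lt0r_neq0.
apply: mulr_le0_ge0; first by rewrite subr_le0.
by rewrite invr_ge0 mulr_ge0 // ?exprn_ge0 // ltW.
Qed.

Lemma phi_nincr (a b : R) : 0 < a -> a <= b -> phi b <= phi a.
Proof.
move=> a0 ab; case: (ltgtP a b) ab => // [altb|->] _; last by [].
have [d dab hd] : exists2 d, d \in `]a, b[%R & phi b - phi a = dphi d * (b - a).
  apply: MVT => //.
    move=> x /[!in_itv] /= /andP[ax _]; apply: is_derive_phi.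
    exact: lt_trans ax.
  apply: derivable_within_continuous => x /[!in_itv] /= /andP[ax _].
  have /is_derive_phi [] // : 0 < x by apply: lt_le_trans ax.
rewrite -subr_le0 hd; apply: mulr_le0_ge0; last by rewrite subr_ge0 ltW.
apply: dphi_le0; move: dab; rewrite in_itv /= => /andP[ad _].
exact: lt_trans ad.
Qed.


Lemma herbst (l : R) : 0 < l -> ln (Zf l) <= c * l ^+ 2.
Proof.
move=> l0; rewrite leNgt; apply/negP => hlt.
have B0 : 0 <= Bf by apply: sumr_ge0 => x _.
have hphi : forall y, 0 < y -> ln (Zf y) = (phi y + c * y) * y.
  by move=> y y0; rewrite /phi; field; rewrite lt0r_neq0.
have d0 : 0 < phi l.
  have := hphi l l0; move: hlt; nra.
set d := phi l in d0.
set l1 := Num.min l (Num.min (1 / (2 * (Bf + 1))) (d / (4 * (Bf ^+ 2 + 1)))).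
have p1 : 0 < 2 * (Bf + 1) by nra.
have p2 : 0 < 4 * (Bf ^+ 2 + 1) by nra.
have l10 : 0 < l1.
  rewrite /l1 !lt_min l0 /= divr_gt0 //= divr_gt0 //.
have [l1l [l1a l1b]] : [/\ l1 <= l, l1 * (2 * (Bf + 1)) <= 1 & l1 * (4 * (Bf ^+ 2 + 1)) <= d].
  have := le_refl l1; rewrite {2}/l1 !le_min => /and3P[h1 h2 h3].
  by split => //; rewrite -ler_pdivlMr // ?mul1r.
have hmon : d <= phi l1 by apply: phi_nincr.
have hup : ln (Zf l1) <= 2 * l1 ^+ 2 * Bf ^+ 2.
  apply: le_trans (Zf_upper (ltW l10) _); last by nra.
  have := le_ln1Dx (_ : -1 < Zf l1 - 1); rewrite addrCA subrr addr0; apply.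
  by have := Zf_ge1 l1; lra.
have e1 := hphi l1 l10.
have s1 : d * l1 <= phi l1 * l1 by rewrite ler_pM2r.
have s2 : 0 <= c * l1 * l1 by apply: mulr_ge0; [apply: mulr_ge0 | ]; rewrite // ltW.
have : d * l1 <= l1 * (2 * l1 * Bf ^+ 2).
  have -> : l1 * (2 * l1 * Bf ^+ 2) = 2 * l1 ^+ 2 * Bf ^+ 2 by ring.
  apply: le_trans hup; rewrite e1; lra.
rewrite mulrC ler_pM2l // => h.
nra.
Qed.

End Herbst.
Section Main.
Variables (R : realType) (n : nat).
Local Notation B := (cube n).

Lemma exp_diff (a b : R) :
  (expR a - expR b) * (a - b) <= (expR a + expR b) * (a - b) ^+ 2.
Proof.
wlog ba : a b / b <= a.
  move=> H; case: (leP b a) => [|/ltW ab]; first exact: H.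
  have := H b a ab.
  have -> : (expR b - expR a) * (b - a) = (expR a - expR b) * (a - b) by ring.
  have -> : (expR b + expR a) * (b - a) ^+ 2 = (expR a + expR b) * (a - b) ^+ 2 by ring.
  by [].
have h := expR_ge1Dx (b - a).
have e : expR a * expR (b - a) = expR b by rewrite -expRD addrC subrK.
have E1 := expR_gt0 a.
have E2 := expR_gt0 b.
have E12 : expR b <= expR a by rewrite ler_expR.
have h2 : expR a * (1 + (b - a)) <= expR b.
  by rewrite -e; apply: ler_wpM2l => //; apply: ltW.
have s1 : expR a - expR b <= expR a * (a - b).
  by move: h2; rewrite mulrDr mulr1 mulrBr; lra.
have ab0 : 0 <= a - b by rewrite subr_ge0.
apply: le_trans (_ : expR a * (a - b) * (a - b) <= _).
  by apply: ler_wpM2r.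
rewrite -mulrA -expr2 ler_wpM2r ?exprn_ge0 //.
by rewrite lerDl ltW.
Qed.

Lemma sym_sum (a : B -> B -> R) (h : B -> B -> R) :
  (forall x y, a x y = a y x) ->
  \sum_x \sum_y a x y * h x y = \sum_x \sum_y a x y * h y x.
Proof.
move=> asym; rewrite exchange_big; apply: eq_bigr => x _; apply: eq_bigr => y _.
by rewrite asym.
Qed.

Lemma dir_bound (pi : B -> R) (L : B -> B -> R) (g : B -> R) :
  (forall x, 0 <= pi x) -> is_generator L -> reversible pi L ->
  dirichlet pi L (fun x => expR (g x)) g <=
  \sum_x pi x * expR (g x) * \sum_y L x y * (g y - g x) ^+ 2.
Proof.
move=> pi0 [Lpos Lsum] rev.
pose a x y := pi x * L x y.
have asym : forall x y, a x y = a y x by move=> x y; rewrite /a rev.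
have D1 : dirichlet pi L (fun x => expR (g x)) g =
    \sum_x \sum_y a x y * (expR (g x) * (g x - g y)).
  rewrite /dirichlet /gen_app -sumrN; apply: eq_bigr => x _.
  have -> : \sum_y L x y * g y = \sum_y L x y * (g y - g x).
    under [RHS]eq_bigr do rewrite mulrBr.
    by rewrite sumrB -mulr_suml Lsum mul0r subr0.
  rewrite mulr_sumr -sumrN; apply: eq_bigr => y _; rewrite /a; ring.
have R1 : \sum_x pi x * expR (g x) * \sum_y L x y * (g y - g x) ^+ 2 =
    \sum_x \sum_y a x y * (expR (g x) * (g x - g y) ^+ 2).
  apply: eq_bigr => x _; rewrite mulr_sumr; apply: eq_bigr => y _; rewrite /a; ring.
rewrite D1 R1.
set U := \sum_x \sum_y a x y * (expR (g x) * (g x - g y)).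
set P := \sum_x \sum_y a x y * (expR (g x) * (g x - g y) ^+ 2).
have UV : U = \sum_x \sum_y a x y * (expR (g y) * (g y - g x)).
  exact: sym_sum.
have PQ : P = \sum_x \sum_y a x y * (expR (g y) * (g y - g x) ^+ 2).
  exact: sym_sum.
have : U + U <= P + P.
  rewrite {2}UV {2}PQ -!big_split /=; apply: ler_sum => x _.
  rewrite -!big_split /=; apply: ler_sum => y _.
  case: (eqVneq x y) => [->|xy]; first by rewrite !subrr expr0n /= !mulr0 !addr0.
  have a0 : 0 <= a x y by rewrite /a mulr_ge0 // Lpos.
  rewrite -!mulrDr; apply: ler_wpM2l => //.
  have := exp_diff (g x) (g y).
  have -> : expR (g x) * (g x - g y) + expR (g y) * (g y - g x) =
     (expR (g x) - expR (g y)) * (g x - g y) by ring.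
  have -> : expR (g x) * (g x - g y) ^+ 2 + expR (g y) * (g y - g x) ^+ 2 =
     (expR (g x) + expR (g y)) * (g x - g y) ^+ 2 by ring.
  by [].
lra.
Qed.


Lemma sum_ind1 (h : 'I_n -> R) (i : 'I_n) (P : 'I_n -> bool) :
  (forall k, P k = (k == i)) -> \sum_k h k * (P k)%:R = h i.
Proof.
move=> HP; rewrite (bigD1 i) //= HP eqxx mulr1 big1 ?addr0 // => k ki.
by rewrite HP (negbTE ki) mulr0.
Qed.

Lemma sum_ind2 (h : 'I_n -> R) (i j : 'I_n) (P : 'I_n -> bool) : i != j ->
  (forall k, P k = (k == i) || (k == j)) -> \sum_k h k * (P k)%:R = h i + h j.
Proof.
move=> ij HP; rewrite (bigD1 i) //= (bigD1 j) 1?eq_sym //= HP eqxx mulr1.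
rewrite HP eqxx orbT mulr1 big1 ?addr0 // => k /andP[kj ki].
by rewrite HP (negbTE ki) (negbTE kj) mulr0.
Qed.

Lemma diff_shape (L : B -> B -> R) (x y : B) : flip_swap L -> x != y -> 0 < L x y ->
  (exists i, forall k, (x k != y k) = (k == i)) \/
  (exists i j, i != j /\ forall k, (x k != y k) = (k == i) || (k == j)).
Proof.
move=> fs xy Lxy; case: (fs x y xy Lxy) => [[i [yi oth]]|[i [j [xij yi yj oth]]]].
  left; exists i => k; case: (eqVneq k i) => [->|ki]; first by rewrite eq_sym.
  by rewrite oth // eqxx.
right; exists i, j; split.
  by apply/eqP => ij; move: xij; rewrite ij eqxx.
move=> k; case: (eqVneq k i) => [->|ki] /=; first by rewrite yi.
case: (eqVneq k j) => [->|kj] /=; first by rewrite yj eq_sym.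
by rewrite oth // eqxx.
Qed.


Section Pairs.
Variables (pi : B -> R) (L : B -> B -> R) (f : B -> R) (alpha : 'I_n -> R).
Hypotheses (Lgen : is_generator L) (fs : flip_swap L)
  (alpha0 : forall i, 0 <= alpha i)
  (lip : forall x y, `|f x - f y| <= d_alpha alpha x y).

Definition S2 (x y : B) := \sum_k alpha k ^+ 2 * (x k != y k)%:R.
Definition cnt (x y : B) := \sum_k (1 : R) * (x k != y k)%:R.

Lemma pair1 x y : L x y * (f y - f x) ^+ 2 <= 2 * (L x y * S2 x y).
Proof.
case: (eqVneq x y) => [->|xy].
  rewrite subrr expr0n /= mulr0 /S2 big1 ?mulr0 // => k _.
  by rewrite eqxx mulr0.
have L0 : 0 <= L x y by case: Lgen => h _; apply: h.
case: (eqVneq (L x y) 0) => [->|Lne]; first by rewrite !mul0r mulr0.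
have Lp : 0 < L x y by rewrite lt_def Lne.
have hd : (f y - f x) ^+ 2 <= d_alpha alpha x y ^+ 2.
  have := lip x y; rewrite ler_norml => /andP[h1 h2]; nra.
rewrite [2 * _]mulrCA; apply: ler_wpM2l => //; apply: le_trans hd _.
case: (diff_shape fs xy Lp) => [[i Hi]|[i [j [ij Hij]]]].
  rewrite /d_alpha /S2 (sum_ind1 _ Hi) (sum_ind1 (fun k => alpha k ^+ 2) Hi).
  by rewrite ler_peMl ?exprn_ge0 // ler1n.
rewrite /d_alpha /S2 (sum_ind2 _ ij Hij) (sum_ind2 (fun k => alpha k ^+ 2) ij Hij).
rewrite -subr_ge0.
have -> : 2 * (alpha i ^+ 2 + alpha j ^+ 2) - (alpha i + alpha j) ^+ 2
   = (alpha i - alpha j) ^+ 2 by ring.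
exact: sqr_ge0.
Qed.

Lemma pair2 x y : x != y -> L x y * cnt x y <= 2 * L x y.
Proof.
move=> xy.
have L0 : 0 <= L x y by case: Lgen => h _; apply: h.
case: (eqVneq (L x y) 0) => [->|Lne]; first by rewrite !mul0r mulr0.
have Lp : 0 < L x y by rewrite lt_def Lne.
rewrite mulrC; apply: ler_wpM2r => //.
case: (diff_shape fs xy Lp) => [[i Hi]|[i [j [ij Hij]]]].
  by rewrite /cnt (sum_ind1 _ Hi) ler1n.
by rewrite /cnt (sum_ind2 _ ij Hij).
Qed.

Definition w (x : B) (i : 'I_n) := \sum_(y : B | y i != x i) L x y.

Lemma energy x : \sum_y L x y * (f y - f x) ^+ 2 <= 2 * \sum_i alpha i ^+ 2 * w x i.
Proof.
apply: le_trans (_ : \sum_y 2 * (L x y * S2 x y) <= _).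
  by apply: ler_sum => y _; apply: pair1.
rewrite -mulr_sumr ler_wpM2l //; rewrite le_eqVlt; apply/orP; left; apply/eqP.
rewrite /S2 /w.
under eq_bigr do rewrite mulr_sumr.
rewrite exchange_big /=; apply: eq_bigr => i _.
rewrite mulr_sumr [RHS]big_mkcond /=; apply: eq_bigr => y _.
by rewrite (eq_sym (x i)); case: (y i != x i); rewrite ?mulr1 ?mulr0 // mulrC.
Qed.

Lemma wsum x : \sum_i w x i <= 2 * (- L x x).
Proof.
case: Lgen => Lpos Lsum.
have -> : \sum_i w x i = \sum_y L x y * cnt x y.
  rewrite /w /cnt; under [RHS]eq_bigr do rewrite mulr_sumr.
  rewrite [RHS]exchange_big /=; apply: eq_bigr => i _.
  rewrite big_mkcond /=; apply: eq_bigr => y _.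
  by rewrite (eq_sym (x i)); case: (y i != x i); rewrite ?mulr1 ?mulr0.
rewrite (bigD1 x) //= {1}/cnt big1 ?mulr0 ?add0r; last by move=> k _; rewrite eqxx mulr0.
have -> : - L x x = \sum_(y | y != x) L x y.
  by move: (Lsum x); rewrite (bigD1 x) //= => /eqP; rewrite addrC addr_eq0 => /eqP ->; rewrite ?opprK.
rewrite mulr_sumr; apply: ler_sum => y yx; apply: pair2.
by rewrite eq_sym.
Qed.

Lemma w_ge0 x i : 0 <= w x i.
Proof.
apply: sumr_ge0 => y yi; case: Lgen => h _; apply: h.
by apply/eqP => e; move: yi; rewrite e eqxx.
Qed.

End Pairs.


Section Sort.
Variables (alpha : 'I_n -> R).
Hypothesis alpha0 : forall i, 0 <= alpha i.
Let s := sort (fun a b : R => b <= a) [seq alpha i | i : 'I_n].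

Lemma s_size : size s = n.
Proof. by rewrite size_sort size_map size_enum_ord. Qed.

Lemma s_sum (G : R -> R) : \sum_i G (alpha i) = \sum_(a <- s) G a.
Proof.
rewrite [RHS](perm_big [seq alpha i | i : 'I_n]); last by rewrite perm_sort perm_refl.
by rewrite big_map big_enum.
Qed.

Lemma s_ge0 j : 0 <= nth 0 s j.
Proof.
case: (ltnP j (size s)) => [js|js]; last by rewrite nth_default.
have : nth 0 s j \in s by exact: mem_nth.
rewrite (perm_mem (s2 := [seq alpha i | i : 'I_n])) ?perm_sort ?perm_refl // => /mapP[i _ ->]; exact: alpha0.
Qed.

Lemma s_sorted i j : (i <= j)%N -> (j < n)%N -> nth 0 s j <= nth 0 s i.
Proof.
move=> ij jn.
have := @sorted_leq_nth R (fun a b : R => b <= a) _ _ 0 s _ i j.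
apply.
- by move=> a b c h1 h2; exact: le_trans h2 h1.
- by move=> a.
- by rewrite /s; apply: sort_sorted => a b; exact: le_total.
- by rewrite inE s_size (leq_ltn_trans ij).
- by rewrite inE s_size.
- by [].
Qed.

Lemma sq_le (a b : R) : 0 <= a -> a <= b -> a ^+ 2 <= b ^+ 2.
Proof. by move=> a0 ab; rewrite !expr2; apply: ler_pM. Qed.

Lemma top_eq k : (k <= n)%N -> top_sqsum alpha k = \sum_(0 <= j < k) nth 0 s j ^+ 2.
Proof.
move=> kn; rewrite /top_sqsum -/s (big_nth 0) size_takel ?s_size //.
by apply: eq_big_nat => j /andP[_ jk]; rewrite nth_take.
Qed.

Lemma top_ge0 k : 0 <= top_sqsum alpha k.
Proof. by apply: sumr_ge0 => a _; exact: sqr_ge0. Qed.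

Lemma knap (wv : 'I_n -> R) (M : R) (k : nat) : 0 < M ->
  (forall i, 0 <= wv i <= M) -> \sum_i wv i <= 2 * (k%:R * M) ->
  \sum_i alpha i ^+ 2 * wv i <= 2 * M * top_sqsum alpha k.
Proof.
move=> M0 hw hsum.
case: (leqP n k) => [nk|kn].
  rewrite /top_sqsum -/s take_oversize ?s_size // -(s_sum (fun a => a ^+ 2)).
  apply: le_trans (_ : \sum_i alpha i ^+ 2 * M <= _).
    apply: ler_sum => i _; apply: ler_wpM2l; first exact: sqr_ge0.
    by case/andP: (hw i).
  rewrite -mulr_suml.
  have : 0 <= \sum_i alpha i ^+ 2 by apply: sumr_ge0 => i _; exact: sqr_ge0.
  set X := \sum_i alpha i ^+ 2 => X0.
  rewrite -subr_ge0; have -> : 2 * M * X - X * M = M * X by ring.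
  by rewrite mulr_ge0 // ltW.
case: k kn hsum => [|k] kn hsum.
  set C := \sum_j alpha j ^+ 2.
  apply: le_trans (_ : \sum_i C * wv i <= _).
    apply: ler_sum => i _; apply: ler_wpM2r; first by case/andP: (hw i).
    by rewrite /C (bigD1 i) //= lerDl; apply: sumr_ge0 => j _; exact: sqr_ge0.
  rewrite -mulr_sumr.
  have C0 : 0 <= C by apply: sumr_ge0 => j _; exact: sqr_ge0.
  have := top_ge0 0; move: hsum; rewrite mul0r mulr0 => hsum t0.
  have h : C * \sum_i wv i <= 0 by rewrite mulr_ge0_le0.
  by apply: le_trans h _; rewrite mulr_ge0 // mulr_ge0 // ltW.
set tau := nth 0 s k ^+ 2.
have tau0 : 0 <= tau by exact: sqr_ge0.
have eK : tau *+ k.+1 = \sum_(0 <= j < k.+1) tau by rewrite sumr_const_nat subn0.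
have kn' : (k.+1 <= n)%N by exact: ltnW.
have step1 : \sum_i alpha i ^+ 2 * wv i <=
    \sum_i (M * Num.max (alpha i ^+ 2 - tau) 0 + tau * wv i).
  apply: ler_sum => i _; case/andP: (hw i) => w0 wM.
  case: (leP tau (alpha i ^+ 2)) => ht.
    rewrite max_l ?subr_ge0 //.
    have : (alpha i ^+ 2 - tau) * wv i <= (alpha i ^+ 2 - tau) * M.
      by apply: ler_wpM2l; rewrite ?subr_ge0.
    have e : alpha i ^+ 2 * wv i = (alpha i ^+ 2 - tau) * wv i + tau * wv i by ring.
    by rewrite e [M * _]mulrC lerD2r.
  have -> : Num.max (alpha i ^+ 2 - tau) 0 = 0.
    by apply: max_r; rewrite subr_le0 ltW.
  rewrite mulr0 add0r.
  by apply: ler_wpM2r => //; apply: ltW.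
have step2 : \sum_i Num.max (alpha i ^+ 2 - tau) 0 =
    top_sqsum alpha k.+1 - tau *+ k.+1.
  rewrite (s_sum (fun a => Num.max (a ^+ 2 - tau) 0)) (big_nth 0) s_size.
  rewrite (big_cat_nat (n := k.+1) (leq0n _) (ltnW kn)).
  rewrite [X in _ + X = _]big1_seq ?addr0; last first.
    move=> j /andP[_]; rewrite mem_index_iota => /andP[kj jn].
    apply: max_r; rewrite subr_le0; apply: sq_le; first exact: s_ge0.
    by apply: s_sorted => //; exact: ltnW.
  rewrite (top_eq kn') eK -sumrB.
  apply: eq_big_nat => j /andP[_ jk]; apply: max_l; rewrite subr_ge0.
  apply: sq_le; first exact: s_ge0.
  by apply: s_sorted => //; exact: ltn_trans kn.
have step3 : tau *+ k.+1 <= top_sqsum alpha k.+1.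
  rewrite (top_eq kn') eK.
  apply: ler_sum_nat => j /andP[_ jk]; apply: sq_le; first exact: s_ge0.
  by apply: s_sorted => //; exact: ltn_trans kn.
move: step1; rewrite big_split /= -mulr_sumr step2 -mulr_sumr => step1.
apply: le_trans step1 _.
have h4 : tau * \sum_i wv i <= tau * (2 * (k.+1%:R * M)) by apply: ler_wpM2l.
move: step3 h4; rewrite -mulr_natr.
set K := (k.+1)%:R; set T := top_sqsum alpha k.+1 => s3 h4.
apply: le_trans (lerD (lexx (M * (T - tau * K))) h4) _.
have -> : M * (T - tau * K) + tau * (2 * (K * M)) = M * T + M * (tau * K) by ring.
have -> : 2 * M * T = M * T + M * T by ring.
by rewrite lerD2l ler_wpM2l // ltW.
Qed.

End Sort.

End Main.
Section Final.
Variables (R : realType) (n : nat).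
Local Notation B := (cube n).

Lemma ent_exp (pi F : B -> R) (l : R) :
  ent pi (fun x => expR (l * F x)) = l * Zd pi F l - Zf pi F l * ln (Zf pi F l).
Proof.
rewrite /ent /mean /Zd /Zf; congr (_ - _).
rewrite mulr_sumr; apply: eq_bigr => x _; rewrite expRK; ring.
Qed.

Lemma ent_bound (pi : B -> R) (L : B -> B -> R) (f : B -> R) (alpha : 'I_n -> R)
  (rho K : R) (F : B -> R) :
  is_prob pi -> is_generator L -> reversible pi L -> flip_swap L ->
  mlsi pi L rho -> 0 < rho -> 0 <= K ->
  (forall i, 0 <= alpha i) ->
  (forall x y, `|f x - f y| <= d_alpha alpha x y) ->
  (forall x y, F y - F x = f y - f x) ->
  (forall x, 0 < pi x -> \sum_i alpha i ^+ 2 * w L x i <= rho * K) ->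
  forall l, 0 < l ->
    l * Zd pi F l - Zf pi F l * ln (Zf pi F l) <= (2 * K) * l ^+ 2 * Zf pi F l.
Proof.
move=> [pi0 pi1] Lgen rev fs ml rho0 K0 alpha0 lip dF hK l l0.
rewrite -ent_exp.
pose E := fun x => expR (l * F x).
have Zpos : 0 <= Zf pi F l by apply: sumr_ge0 => x _; rewrite mulr_ge0 // ltW // expR_gt0.
case: (boolP [exists x, exists y, E x != E y]) => [/existsP[x0 /existsP[y0 hxy]]|hc].
  have := ml E (fun x => expR_gt0 _) (ex_intro _ x0 (ex_intro _ y0 hxy)).
  have -> : (fun x => ln (E x)) = (fun x => l * F x) by apply/funext => z; rewrite /E expRK.
  move=> h1.
  have h2 := dir_bound (fun x => l * F x) pi0 Lgen rev.
  have h3 : \sum_x pi x * expR (l * F x) * \sum_y L x y * (l * F y - l * F x) ^+ 2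
      <= rho * ((2 * K) * l ^+ 2 * Zf pi F l).
    rewrite /Zf mulr_sumr mulr_sumr; apply: ler_sum => x _.
    case: (eqVneq (pi x) 0) => [->|pne]; first by rewrite !mul0r !mulr0.
    have px : 0 < pi x by rewrite lt_def pne pi0.
    have hx : \sum_y L x y * (l * F y - l * F x) ^+ 2 <= rho * (2 * K) * l ^+ 2.
      have -> : \sum_y L x y * (l * F y - l * F x) ^+ 2
          = l ^+ 2 * \sum_y L x y * (f y - f x) ^+ 2.
        rewrite mulr_sumr; apply: eq_bigr => y _; rewrite -mulrBr -dF; ring.
      have e := energy Lgen fs alpha0 lip x.
      have := hK x px.
      have l2 : 0 <= l ^+ 2 by exact: sqr_ge0.
      set S := \sum_y L x y * (f y - f x) ^+ 2 in e *.
      set W := \sum_i alpha i ^+ 2 * w L x i in e *.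
      move=> hW.
      have : S <= 2 * (rho * K) by apply: le_trans e _; rewrite ler_wpM2l.
      move=> hS.
      have -> : rho * (2 * K) * l ^+ 2 = l ^+ 2 * (2 * (rho * K)) by ring.
      by rewrite ler_wpM2l.
    have hpe : 0 <= pi x * expR (l * F x) by rewrite mulr_ge0 // ltW // expR_gt0.
    apply: le_trans (ler_wpM2l hpe hx) _.
    rewrite le_eqVlt; apply/orP; left; apply/eqP; ring.
  have := le_trans h1 (le_trans h2 h3).
  by rewrite ler_pM2l.
have cst : forall x, E x = E [ffun => false].
  move=> x; apply/eqP; apply: contraNT hc => h.
  by apply/existsP; exists x; apply/existsP; exists [ffun => false].
have -> : ent pi (fun x => expR (l * F x)) = 0.
  have cst' : forall x, expR (l * F x) = expR (l * F [ffun => false]) by exact: cst.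
  have Zc : \sum_x pi x * expR (l * F x) = expR (l * F [ffun => false]).
    by under eq_bigr do rewrite cst'; rewrite -mulr_suml pi1 mul1r.
  rewrite /ent /mean Zc.
  under eq_bigr do rewrite cst'.
  by rewrite -mulr_suml pi1 mul1r subrr.
apply: mulr_ge0 => //; apply: mulr_ge0; last exact: sqr_ge0.
by apply: mulr_ge0.
Qed.


Lemma tail (pi F : B -> R) (c t : R) :
  is_prob pi -> \sum_x pi x * F x = 0 -> 0 < c ->
  (forall l, 0 < l -> ln (Zf pi F l) <= c * l ^+ 2) -> 0 < t ->
  \sum_(x | t < F x) pi x <= expR (- (t ^+ 2 / (4 * c))).
Proof.
move=> [pi0 pi1] mF c0 hZ t0.
set lam := t / (2 * c).
have lam0 : 0 < lam by rewrite divr_gt0 // mulr_gt0.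
apply: le_trans (_ : \sum_x pi x * expR (lam * F x - lam * t) <= _).
  rewrite big_mkcond /=; apply: ler_sum => x _; case: ifP => h.
    rewrite -{1}[pi x]mulr1; apply: ler_wpM2l => //.
    apply: le_trans (expR_ge1Dx _); rewrite lerDl -mulrBr; apply: mulr_ge0.
      exact: ltW.
    by rewrite subr_ge0 ltW.
  by rewrite mulr_ge0 // ltW // expR_gt0.
have -> : \sum_x pi x * expR (lam * F x - lam * t) = expR (- (lam * t)) * Zf pi F lam.
  rewrite /Zf mulr_sumr; apply: eq_bigr => x _; rewrite expRD; ring.
have Zp := Zf_gt0 pi0 pi1 mF lam.
rewrite -(lnK (x := Zf pi F lam)) ?posrE // -expRD.
have -> : - (t ^+ 2 / (4 * c)) = - (lam * t) + c * lam ^+ 2.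
  by rewrite /lam; field; rewrite lt0r_neq0.
by rewrite ler_expR lerD2l hZ.
Qed.

Lemma final_K (pi : B -> R) (L : B -> B -> R) (f : B -> R) (alpha : 'I_n -> R)
  (rho K t : R) :
  is_prob pi -> is_generator L -> reversible pi L -> flip_swap L ->
  mlsi pi L rho -> 0 < rho -> 0 <= K ->
  (forall i, 0 <= alpha i) ->
  (forall x y, `|f x - f y| <= d_alpha alpha x y) ->
  (0 < K -> forall x, 0 < pi x -> \sum_i alpha i ^+ 2 * w L x i <= rho * K) ->
  0 < t ->
  prob_gt pi f (mean pi f + t) <= expR (- (t ^+ 2 / (8 * K))).
Proof.
move=> [pi0 pi1] Lgen rev fs ml rho0 K0 alpha0 lip hK t0.
case: (eqVneq K 0) => [->|Kne].
  rewrite mulr0 invr0 mulr0 oppr0 expR0 /prob_gt -pi1.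
  rewrite [X in _ <= X](bigID (fun x => mean pi f + t < f x)) /= lerDl.
  by apply: sumr_ge0 => x _.
have Kp : 0 < K by rewrite lt_def Kne K0.
set m := mean pi f.
pose F x := f x - m.
have mF : \sum_x pi x * F x = 0.
  rewrite /F; under eq_bigr do rewrite mulrBr.
  by rewrite sumrB -mulr_suml pi1 mul1r subrr.
have dF : forall x y, F y - F x = f y - f x by move=> x y; rewrite /F; ring.
have hent := @ent_bound pi L f alpha rho K F (conj pi0 pi1) Lgen rev fs ml rho0 K0
  alpha0 lip dF (hK Kp).
have c0 : 0 <= 2 * K by rewrite mulr_ge0.
have herb := herbst pi0 pi1 mF c0 hent.
have K2 : 0 < 2 * K by rewrite mulr_gt0.
have := tail (conj pi0 pi1) mF K2 herb t0.
have -> : 4 * (2 * K) = 8 * K by ring.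
move=> h; apply: le_trans h; rewrite le_eqVlt; apply/orP; left; apply/eqP.
by rewrite /prob_gt; apply: eq_bigl => x; rewrite /F ltrBrDl.
Qed.

End Final.
Unset Implicit Arguments.

Theorem proposition4p7 (R : realType) (n : nat) (pi : cube n -> R)
  (L : cube n -> cube n -> R) (rho Rs : R) (f : cube n -> R) (alpha : 'I_n -> R) :
  is_prob pi -> is_generator L -> reversible pi L -> flip_swap L ->
  is_mlsi_const pi L rho -> 0 <= Rs -> stable pi L rho Rs ->
  (forall i, 0 <= alpha i) ->
  (forall x y, `|f x - f y| <= d_alpha alpha x y) ->
  forall t : R, 0 < t ->
    prob_gt pi f (mean pi f + t) <= expR (- (t ^+ 2 / (8 * Rs * sqnorm alpha)))
    /\
    prob_gt pi f (mean pi f + t)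
      <= expR (- (t ^+ 2 / (16 * Rs *
            top_sqsum alpha `|Num.ceil (Delta L / (Rs * rho))|%N))).
Proof.
move=> hp Lgen rev fs [ml _] Rs0 [rho0 stab] alpha0 lip t t0.
have sq0 : 0 <= sqnorm alpha by apply: sumr_ge0 => i _; exact: sqr_ge0.
split.
  rewrite -mulrA.
  apply: (final_K hp Lgen rev fs ml rho0 (mulr_ge0 Rs0 sq0) alpha0 lip _ t0).
  move=> _ x px.
  apply: le_trans (_ : \sum_i alpha i ^+ 2 * (Rs * rho) <= _).
    apply: ler_sum => i _; apply: ler_wpM2l; first exact: sqr_ge0.
    exact: stab.
  rewrite -mulr_suml /sqnorm le_eqVlt; apply/orP; left; apply/eqP; ring.
set k := `|Num.ceil (Delta L / (Rs * rho))|%N.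
have t0' := top_ge0 alpha k.
have -> : 16 * Rs * top_sqsum alpha k = 8 * (2 * Rs * top_sqsum alpha k) by ring.
apply: (final_K hp Lgen rev fs ml rho0 _ alpha0 lip _ t0).
  by apply: mulr_ge0 => //; apply: mulr_ge0.
move=> Kp x px.
have Rsp : 0 < Rs.
  rewrite lt_def Rs0 andbT; apply/eqP => e; move: Kp; rewrite e mulr0 mul0r ltxx.
  by [].
set M := Rs * rho.
have M0 : 0 < M by rewrite mulr_gt0.
have hw : forall i, 0 <= w L x i <= M.
  by move=> i; rewrite w_ge0 //= stab.
have ws := wsum Lgen fs x.
have Lxx : 0 <= - L x x.
  have : 0 <= \sum_i w L x i by apply: sumr_ge0 => i _; exact: w_ge0.
  move=> h; have := le_trans h ws; rewrite pmulr_rge0 //.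
have hD : - L x x <= Delta L by exact: le_bigmax.
have D0 : 0 <= Delta L := le_trans Lxx hD.
have hk : Delta L <= k%:R * M.
  rewrite -ler_pdivrMr // /k natr_absz ger0_norm; first exact: ceil_ge.
  by rewrite ceil_ge0; apply: lt_le_trans (_ : -1 < 0) _; rewrite ?ltrN10 // divr_ge0 // ltW.
have hsum : \sum_i w L x i <= 2 * (k%:R * M).
  apply: le_trans ws _; rewrite ler_pM2l //; exact: le_trans hD hk.
have := knap alpha0 M0 hw hsum.
move=> h; apply: le_trans h _; rewrite le_eqVlt; apply/orP; left; apply/eqP.
rewrite /M; ring.
Qed.
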